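(* In the setting described in the context, let $\mathcal{J},\mathcal{J}'\subseteq\mathcal{I}$ be arbitrary, and put $\mathcal{J}_\cup=\mathcal{J}\cup\mathcal{J}'$, $\mathcal{J}_\cap=\mathcal{J}\cap\mathcal{J}'$. Then $$ \operatorname{Cov}(\mathbf{c}_{\mathcal{J}},\mathbf{c}_{\mathcal{J}'}) \;=\; \sum_{\mathcal{S}\subseteq\mathcal{J}_\cup} t_{\mathcal{S}}\,(q-p)^{|\mathcal{S}|}\,p^{|\mathcal{J}_\cup|-|\mathcal{S}|}\Big(1-(q+p)^{|\mathcal{S}\cap\mathcal{J}_\cap|}\,p^{|\mathcal{J}_\cap|-|\mathcal{S}\cap\mathcal{J}_\cap|}\Big), $$ with $t_\emptyset=N$.
   Context: Setting: Let $N\ge 1$, let $\mathcal{I}$ be a finite set of column indices, and let $X\in\{0,1\}^{N\times\mathcal{I}}$ be a fixed (ground-truth) binary matrix with rows $n=1,\dots,N$. Fix probabilities $0\le p<q\le 1$. The perturbed (''evidence'') matrix $\hat{X}$ is a random matrix in $\{0,1\}^{N\times\mathcal{I}}$ whose entries are mutually independent, with $\hat X_{ni}\sim\mathrm{Bernoulli}(q)$ if $X_{ni}=1$ and $\hat X_{ni}\sim\mathrm{Bernoulli}(p)$ if $X_{ni}=0$. For $\mathcal{S}\subseteq\mathcal{I}$ define the true co-occurrence count $t_{\mathcal{S}}=\#\{n : X_{ni}=1 \text{ for all } i\in\mathcal{S}\}$ (so $t_\emptyset=N$) and the perturbed co-occurrence count $\mathbf{c}_{\mathcal{S}}=\sum_{n=1}^N\prod_{i\in\mathcal{S}}\hat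 X_{ni}$ (so $\mathbf{c}_\emptyset=N$). *)

(* Defs.v *)
(* Discrete finite probability space of all perturbed
   matrices Y : 'I_N * I -> bool, with the product (independent Bernoulli) law. *)
From HB Require Import structures.
From mathcomp Require Import all_boot all_order all_algebra.
Set Implicit Arguments. Unset Strict Implicit. Unset Printing Implicit Defensive.
Import Order.TTheory GRing.Theory Num.Theory.
Local Open Scope ring_scope.

Section Defs.
Variables (R : realFieldType) (N : nat) (I : finType).

Definition bmatrix := {ffun 'I_N * I -> bool}.

Definition entry_prob (p q : R) (x b : bool) : R :=
  let r := if x then q else p in if b then r else 1 - r.

Definition pert_prob (X : bmatrix) (p q : R) (Y : bmatrix) : R :=
  \prod_(ni : 'I_N * I) entry_prob p q (X ni) (Y ni).

Definition expect (X : bmatrix) (p q : R) (f : bmatrix -> R) : R :=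
  \sum_(Y : bmatrix) pert_prob X p q Y * f Y.

Definition covariance (X : bmatrix) (p q : R) (f g : bmatrix -> R) : R :=
  expect X p q (fun Y => f Y * g Y) - expect X p q f * expect X p q g.

Definition true_count (X : bmatrix) (S : {set I}) : nat :=
  #|[set n : 'I_N | [forall i in S, X (n, i)]]|.

Definition pert_count (S : {set I}) (Y : bmatrix) : R :=
  \sum_(n < N) \prod_(i in S) (Y (n, i))%:R.

End Defs.

(* Main.v *)
Require Import Defs.
From HB Require Import structures.
From mathcomp Require Import all_boot all_order all_algebra.
From mathcomp Require Import ring.
Import Order.TTheory GRing.Theory Num.Theory.
Local Open Scope ring_scope.

Section Aux.
Variable R : comNzRingType.

Lemma prod_bool (T : finType) (A : {pred T}) (f : T -> bool) :
  \prod_(k in A) ((f k)%:R : R) = ([forall k in A, f k])%:R.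
Proof.
case: (boolP [forall k in A, f k]) => [/forallP H | Hn].
  by rewrite big1 // => k kA; move/implyP: (H k) => /(_ kA) ->.
move: Hn; rewrite negb_forall => /existsP [k].
rewrite negb_imply => /andP[kA /negbTE fk].
by rewrite (bigD1 k) //= fk mul0r.
Qed.

Lemma forallU (T : finType) (A B : {set T}) (f : T -> bool) :
  [forall k in A :|: B, f k] = [forall k in A, f k] && [forall k in B, f k].
Proof.
apply/forallP/andP => [H | [/forallP H1 /forallP H2] k].
  split; apply/forallP => k; apply/implyP => kin; move/implyP: (H k); apply;
  by rewrite in_setU kin ?orbT.
rewrite in_setU; apply/implyP; case/orP => kin.
  exact: (implyP (H1 k)).
exact: (implyP (H2 k)).
Qed.

Lemma prodUI (T : finType) (A B : {set T}) (F : T -> R) :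
  \prod_(k in A) F k * \prod_(k in B) F k =
  \prod_(k in A :|: B) F k * \prod_(k in A :&: B) F k.
Proof.
rewrite (big_setID (A := A :|: B) A) (big_setID (A := B) A) /=.
have -> : (A :|: B) :&: A = A by apply/setIidPr; exact: subsetUl.
have -> : (A :|: B) :\: A = B :\: A by rewrite setDUl setDv set0U.
by rewrite setIC; ring.
Qed.

Lemma prod_ifK (I : finType) (A K : {set I}) (f : I -> R) :
  \prod_(i in A) (if i \in K then f i else 1) = \prod_(i in A :&: K) f i.
Proof. by rewrite -big_mkcondr; apply: eq_bigl => i; rewrite in_setI. Qed.

Lemma split_prod (I : finType) (S : {set I}) (F G : I -> R) :
  \prod_i (if i \in S then F i else G i) =
  \prod_(i in S) F i * \prod_(i in ~: S) G i.
Proof.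
rewrite (bigID (mem S)) /=; congr (_ * _).
  by apply: eq_big => // i ->.
by apply: eq_big => [i|i /negbTE ->]; rewrite ?in_setC.
Qed.

Lemma natb_if (b : bool) : (if b then 1 else 0) = (b%:R : R).
Proof. by case: b. Qed.

Lemma row_identity (I : finType) (a : I -> bool) (p q : R) (K L : {set I}) :
  L \subset K ->
  \sum_(S : {set I} | S \subset K) ([forall i in S, a i])%:R *
     ((q - p) ^+ #|S| * p ^+ (#|K| - #|S|) *
      (1 - (q + p) ^+ #|S :&: L| * p ^+ (#|L| - #|S :&: L|)))
  = \prod_(i in K) (if a i then q else p) *
      (1 - \prod_(i in L) (if a i then q else p)).
Proof.
move=> LK.
pose F1 i := if i \in K then (a i)%:R * (q - p) else 0.
pose G1 i := if i \in K then p else 1.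
pose F2 i := if i \in K then (a i)%:R * (q - p) * (if i \in L then q + p else 1) else 0.
pose G2 i := if i \in K then p * (if i \in L then p else 1) else 1.
transitivity (\sum_(S : {set I}) (\prod_i (if i \in S then F1 i else G1 i)
                 - \prod_i (if i \in S then F2 i else G2 i))).
  rewrite [RHS](bigID (fun S : {set I} => S \subset K)) /= [X in _ = _ + X]big1 ?addr0.
    apply: eq_bigr => S SK.
    rewrite !split_prod.
    have -> : \prod_(i in S) F1 i = \prod_(i in S) ((a i)%:R * (q - p)).
      by apply: eq_bigr => i iS; rewrite /F1 (subsetP SK i iS).
    have -> : \prod_(i in S) F2 i =
              \prod_(i in S) ((a i)%:R * (q - p) * (if i \in L then q + p else 1)).
      by apply: eq_bigr => i iS; rewrite /F2 (subsetP SK i iS).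
    have -> : \prod_(i in ~: S) G2 i =
              \prod_(i in ~: S) ((if i \in K then p else 1) * (if i \in L then p else 1)).
      apply: eq_bigr => i _; rewrite /G2.
      case iL: (i \in L); first by rewrite (subsetP LK i iL).
      by case: (i \in K); rewrite ?mulr1.
    rewrite !big_split /= /G1 !prod_ifK !prodr_const prod_bool.
    have -> : #|~: S :&: K| = (#|K| - #|S|)%N by rewrite setIC -setDE cardsDS.
    have -> : #|~: S :&: L| = (#|L| - #|S :&: L|)%N by rewrite setIC -setDE cardsD setIC.
    rewrite setIC; ring.
  move=> S /subsetPn [i iS iK].
  rewrite (bigD1 i) //= [X in _ - X](bigD1 i) //= iS /F1 /F2 (negbTE iK).
  by rewrite !mul0r subrr.
rewrite sumrB -(@bigA_distr R 0 1 *%R +%R I F1 G1) -(@bigA_distr R 0 1 *%R +%R I F2 G2).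
rewrite mulrBr mulr1; congr (_ - _).
  rewrite [RHS]big_mkcond; apply: eq_bigr => i _; rewrite /F1 /G1.
  by case: (i \in K) => //; case: (a i) => /=; ring.
rewrite [X in X * _]big_mkcond [X in _ * X]big_mkcond -big_split /=.
apply: eq_bigr => i _; rewrite /F2 /G2.
case iL: (i \in L).
  by rewrite (subsetP LK i iL); case: (a i) => /=; ring.
by case: (i \in K); case: (a i) => /=; ring.
Qed.

End Aux.

Section Prob.
Variables (R : realFieldType) (N : nat) (I : finType) (X : bmatrix N I) (p q : R).

Definition rr (k : 'I_N * I) : R := if X k then q else p.

Lemma expect_ext (f g : bmatrix N I -> R) :
  (forall Y, f Y = g Y) -> expect X p q f = expect X p q g.
Proof. by move=> fg; apply: eq_bigr => Y _; rewrite fg. Qed.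

Lemma expect_prod (T : {set 'I_N * I}) :
  expect X p q (fun Y => \prod_(k in T) ((Y k)%:R : R)) = \prod_(k in T) rr k.
Proof.
rewrite /expect /pert_prob.
transitivity (\sum_(Y : {ffun 'I_N * I -> bool})
   \prod_k (entry_prob p q (X k) (Y k) * (if k \in T then ((Y k)%:R : R) else 1))).
  by apply: eq_bigr => Y _; rewrite big_split /= -big_mkcond.
rewrite -(bigA_distr_bigA (fun k (b : bool) => entry_prob p q (X k) b * (if k \in T then (b%:R : R) else 1))) /= [RHS]big_mkcond /=; apply: eq_bigr => k _.
rewrite big_bool /= /entry_prob /rr.
by case: (k \in T); case: (X k) => /=; ring.
Qed.

Lemma expect_sum (F : 'I_N -> bmatrix N I -> R) :
  expect X p q (fun Y => \sum_(i < N) F i Y) = \sum_(i < N) expect X p q (F i).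
Proof. by rewrite /expect; under eq_bigr do rewrite mulr_sumr; exact: exchange_big. Qed.

Lemma cov_sum (F G : 'I_N -> bmatrix N I -> R) :
  covariance X p q (fun Y => \sum_(n < N) F n Y) (fun Y => \sum_(m < N) G m Y) =
  \sum_(n < N) \sum_(m < N) covariance X p q (F n) (G m).
Proof.
rewrite /covariance.
rewrite (@expect_ext _ (fun Y => \sum_(n < N) \sum_(m < N) F n Y * G m Y));
  last by move=> Y; rewrite big_distrlr.
rewrite (expect_sum (fun n Y => \sum_(m < N) F n Y * G m Y)).
under eq_bigr do rewrite (expect_sum (fun m Y => F _ Y * G m Y)).
rewrite (expect_sum F) (expect_sum G) big_distrlr /= -sumrB; apply: eq_bigr => n _.
by rewrite -sumrB.
Qed.

Lemma cov_mon (T1 T2 : {set 'I_N * I}) :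
  covariance X p q (fun Y => \prod_(k in T1) ((Y k)%:R : R))
                   (fun Y => \prod_(k in T2) ((Y k)%:R : R)) =
  \prod_(k in T1 :|: T2) rr k * (1 - \prod_(k in T1 :&: T2) rr k).
Proof.
rewrite /covariance (@expect_ext _ (fun Y => \prod_(k in T1 :|: T2) ((Y k)%:R : R))).
  by rewrite !expect_prod prodUI; ring.
by move=> Y; rewrite !prod_bool forallU -natrM mulnb.
Qed.

Definition row (n : 'I_N) (K : {set I}) : {set 'I_N * I} := (fun i => (n, i)) @: K.

Lemma mem_row n K a b : ((a, b) \in row n K) = (a == n) && (b \in K).
Proof.
apply/imsetP/andP => [[i iK [-> ->]] | [/eqP -> bK]]; first by split.
by exists b.
Qed.

Lemma row_prod n K (F : 'I_N * I -> R) :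
  \prod_(k in row n K) F k = \prod_(i in K) F (n, i).
Proof. by rewrite big_imset // => x y _ _ []. Qed.

Lemma cov_rows (n m : 'I_N) (J J' : {set I}) :
  covariance X p q (fun Y => \prod_(i in J) ((Y (n, i))%:R : R))
                   (fun Y => \prod_(i in J') ((Y (m, i))%:R : R)) =
  \prod_(k in row n J :|: row m J') rr k * (1 - \prod_(k in row n J :&: row m J') rr k).
Proof.
rewrite -cov_mon /covariance.
rewrite (@expect_ext (fun Y => _ * _) (fun Y => \prod_(k in row n J) ((Y k)%:R : R) *
   \prod_(k in row m J') ((Y k)%:R : R))); last by move=> Y; rewrite !row_prod.
rewrite (@expect_ext (fun Y => \prod_(i in J) _) (fun Y => \prod_(k in row n J) ((Y k)%:R : R)));
  last by move=> Y; rewrite !row_prod.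
rewrite (@expect_ext (fun Y => \prod_(i in J') _) (fun Y => \prod_(k in row m J') ((Y k)%:R : R)));
  last by move=> Y; rewrite !row_prod.
by [].
Qed.

Lemma tc (S : {set I}) : ((true_count X S)%:R : R) = \sum_(n < N) ([forall i in S, X (n, i)])%:R.
Proof.
rewrite /true_count -sum1_card natr_sum big_mkcond /=; apply: eq_bigr => n _.
by rewrite inE natb_if.
Qed.

End Prob.
Arguments rr {R N I} X p q k.
Arguments row {N I} n K.


Theorem theorem3 (R : realFieldType) (N : nat) (I : finType)
    (X : bmatrix N I) (p q : R) (J J' : {set I}) :
  (1 <= N)%N -> 0 <= p -> p < q -> q <= 1 ->
  covariance X p q (@pert_count R N I J) (@pert_count R N I J') =
  \sum_(S : {set I} | S \subset J :|: J')
    (true_count X S)%:R * (q - p) ^+ #|S| * p ^+ (#|J :|: J'| - #|S|)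
    * (1 - (q + p) ^+ #|S :&: (J :&: J')|
           * p ^+ (#|J :&: J'| - #|S :&: (J :&: J')|)).
Proof.
move=> _ _ _ _.
transitivity (\sum_(n < N) \prod_(i in J :|: J') rr X p q (n, i) *
                 (1 - \prod_(i in J :&: J') rr X p q (n, i))).
  rewrite /pert_count cov_sum; apply: eq_bigr => n _.
  rewrite (bigD1 n) //= big1 ?addr0.
    rewrite cov_rows.
    have -> : row n J :|: row n J' = row n (J :|: J').
      apply/setP => [[a b]]; rewrite in_setU !mem_row in_setU.
      by case: (a == n).
    have -> : row n J :&: row n J' = row n (J :&: J').
      apply/setP => [[a b]]; rewrite in_setI !mem_row in_setI.
      by case: (a == n).
    by rewrite !row_prod.
  move=> m mn; rewrite cov_rows.
  have -> : row n J :&: row m J' = set0.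
    apply/setP => [[a b]]; rewrite in_setI !mem_row in_set0.
    case: (a =P n) => [-> | _] //=; rewrite eq_sym (negbTE mn).
    by rewrite andbF.
  by rewrite big_set0 subrr mulr0.
under [RHS]eq_bigr do rewrite tc -!mulrA mulr_suml.
rewrite [RHS]exchange_big /=; apply: eq_bigr => n _.
rewrite -(@row_identity R I (fun i => X (n, i)) p q (J :|: J') (J :&: J'));
  last by apply: (subset_trans (subsetIl _ _)); apply: subsetUl.
by apply: eq_bigr => S _; rewrite !mulrA.
Qed.
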